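(* For all $\gamma'\ge\gamma>0$, $$\|\hat f_{n,\gamma'}-\hat f_{n,\gamma}\|_\infty\le\frac{2\sqrt K(\gamma'-\gamma)\sqrt{\log n}}{\gamma^{3/2}}.$$
   Context: Let $\mathcal X$ be a locally compact metric space in which every open set is $\sigma$-compact, and $\|f\|_\infty=\sup_x|f(x)|$. Let $k:\mathcal X\times\mathcal X\to\mathbb R$ be a continuous, symmetric, positive semidefinite kernel with RKHS $\mathcal H$ and $K:=\sup_xk(x,x)<\infty$; assume $k-\delta$ is positive semidefinite for some $\delta>0$, so the constant function $1_{\mathcal X}\in\mathcal H$. Data: $n\in\mathbb N$, points $X_1,\ldots,X_n\in\mathcal X$, times $T_i\in(0,\infty)$, indicators $I_i\in\{0,1\}$. Define $N_i(t)=\mathbb 1\{T_i\le t,\ I_i=0\}$, $R_i(t)=\mathbb 1\{T_i\ge t\}$, $S_n(f,t)=\frac1n\sum_{i=1}^nR_i(t)e^{f(X_i)}$, $P_n(f)=\frac1n\sum_{i=1}^nf(X_i)$, $\ell_n(f)=\frac1n\sum_{i=1}^n N_i(1)\log S_n(f,T_i)-\frac1n\sum_{i=1}^n f(X_i)N_i(1)$, for $\gamma>0$ the penalised objective $\ell_{n,\gamma}(f)=\ell_n(f)+\gamma\|f-P_n(f)1_{\mathcal X}\|_{\mathcal H}^2+\gamma P_n(f)^2$, and $\hat f_{n,\gamma}$ its unique minimiser over $f\in\mathcal H$. *)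

(* Defs.v *)
From HB Require Import structures.
From mathcomp Require Import all_boot all_order all_algebra.
From mathcomp Require Import all_classical all_reals all_analysis.
Set Implicit Arguments. Unset Strict Implicit. Unset Printing Implicit Defensive.
Import Order.TTheory GRing.Theory Num.Theory.
Import numFieldNormedType.Exports.
Local Open Scope classical_set_scope.
Local Open Scope ring_scope.

Section Defs.
Context {R : realType} {X : Type}.

Definition sigma_compact {T : topologicalType} (A : set T) : Prop :=
  exists C : nat -> set T, (forall m, compact (C m)) /\ A = \bigcup_m C m.

Definition psd_kernel (k : X -> X -> R) : Prop :=
  forall (m : nat) (x : 'I_m -> X) (c : 'I_m -> R),
    0 <= \sum_(i < m) \sum_(j < m) c i * c j * k (x i) (x j).

Definition is_RKHS (k : X -> X -> R) (Hs : set (X -> R))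
    (ip : (X -> R) -> (X -> R) -> R) : Prop :=
      Hs (fun _ => 0) /\
      (forall f g, Hs f -> Hs g -> Hs (fun x => f x + g x)) /\
      (forall (a : R) f, Hs f -> Hs (fun x => a * f x)) /\
      (forall f g, Hs f -> Hs g -> ip f g = ip g f) /\
      (forall a b f g h, Hs f -> Hs g -> Hs h ->
         ip (fun x => a * f x + b * g x) h = a * ip f h + b * ip g h) /\
      (forall f, Hs f -> 0 <= ip f f) /\
      (forall f, Hs f -> ip f f = 0 -> f = (fun _ => 0)) /\
      (forall u : nat -> X -> R, (forall m, Hs (u m)) ->
         (forall e : R, 0 < e -> exists N : nat, forall p q : nat,
            (N <= p)%N -> (N <= q)%N ->
            Num.sqrt (ip (fun x => u p x - u q x) (fun x => u p x - u q x)) < e) ->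
         exists2 f, Hs f & forall e : R, 0 < e -> exists N : nat, forall p : nat,
            (N <= p)%N ->
            Num.sqrt (ip (fun x => u p x - f x) (fun x => u p x - f x)) < e) /\
      (forall x, Hs (k x)) /\
      (forall f x, Hs f -> ip f (k x) = f x).

Variables (n : nat) (Xs : 'I_n -> X) (T : 'I_n -> R) (I : 'I_n -> bool).

Definition Ncount (i : 'I_n) (t : R) : R := if (T i <= t) && ~~ I i then 1 else 0.
Definition Rrisk (i : 'I_n) (t : R) : R := if t <= T i then 1 else 0.

Definition Sn (f : X -> R) (t : R) : R :=
  n%:R^-1 * \sum_(i < n) Rrisk i t * expR (f (Xs i)).

Definition Pn (f : X -> R) : R := n%:R^-1 * \sum_(i < n) f (Xs i).

Definition elln (f : X -> R) : R :=
  n%:R^-1 * \sum_(i < n) Ncount i 1 * ln (Sn f (T i))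
  - n%:R^-1 * \sum_(i < n) f (Xs i) * Ncount i 1.

Definition elln_gamma (ip : (X -> R) -> (X -> R) -> R) (gamma : R)
    (f : X -> R) : R :=
  let g := fun x => f x - Pn f in
  elln f + gamma * ip g g + gamma * (Pn f) ^+ 2.

Definition is_minimiser (Hs : set (X -> R)) (ip : (X -> R) -> (X -> R) -> R)
    (gamma : R) (fh : X -> R) : Prop :=
  Hs fh /\ forall f, Hs f -> elln_gamma ip gamma fh <= elln_gamma ip gamma f.

End Defs.

(* Main.v *)
Require Import Defs.
From HB Require Import structures.
From mathcomp Require Import all_boot all_order all_algebra.
From mathcomp Require Import all_classical all_reals all_analysis.
From mathcomp Require Import ring lra.
Import Order.TTheory GRing.Theory Num.Theory.
Import numFieldNormedType.Exports.
Local Open Scope classical_set_scope.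
Local Open Scope ring_scope.
Set Implicit Arguments. Unset Strict Implicit.


Lemma epsN (R : realType) (N p : nat) : (N <= p)%N ->
  (p.+1%:R : R)^-1 <= (N.+1%:R)^-1.
Proof. by move=> h; rewrite lef_pV2 ?posrE ?ltr0Sn // ler_nat. Qed.

Lemma arch (R : realType) (e : R) : 0 < e -> exists N : nat, (N.+1%:R : R)^-1 < e.
Proof.
move=> e0; exists (Num.trunc (e^-1)).
rewrite -[X in _ < X]invrK ltf_pV2 ?posrE ?ltr0Sn ?invr_gt0 //.
exact: truncnS_gt.
Qed.

Lemma midexp (R : realType) (x y : R) :
  expR (2^-1 * x + 2^-1 * y) <= 2^-1 * (expR x + expR y).
Proof.
set m := 2^-1 * x + 2^-1 * y.
have hx : expR m * (1 + (x - m)) <= expR x.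
  have -> : expR x = expR m * expR (x - m) by rewrite -expRD addrC subrK.
  by apply: ler_wpM2l; [exact: expR_ge0|exact: expR_ge1Dx].
have hy : expR m * (1 + (y - m)) <= expR y.
  have -> : expR y = expR m * expR (y - m) by rewrite -expRD addrC subrK.
  by apply: ler_wpM2l; [exact: expR_ge0|exact: expR_ge1Dx].
have e : expR m * (1 + (x - m)) + expR m * (1 + (y - m)) = 2 * expR m.
  by rewrite /m; field.
have : 2 * expR m <= expR x + expR y by rewrite -e; exact: lerD.
move: (expR m) (expR x) (expR y) => a b c h.
have e2 : 2^-1 * (b + c) = (b + c) / 2 by rewrite mulrC.
rewrite e2 ler_pdivlMr; last exact: ltr0n.
by rewrite mulrC.
Qed.

Section All.
Variables (R : realType) (X : Type) (k : X -> X -> R) (Hs : set (X -> R))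
  (ip : (X -> R) -> (X -> R) -> R).
Hypothesis H0 : Hs (fun _ => 0).
Hypothesis Hadd : forall f g, Hs f -> Hs g -> Hs (fun x => f x + g x).
Hypothesis Hscal : forall (a : R) f, Hs f -> Hs (fun x => a * f x).
Hypothesis ipC : forall f g, Hs f -> Hs g -> ip f g = ip g f.
Hypothesis ipL : forall a b f g h, Hs f -> Hs g -> Hs h ->
         ip (fun x => a * f x + b * g x) h = a * ip f h + b * ip g h.
Hypothesis ippos : forall f, Hs f -> 0 <= ip f f.
Hypothesis ipdef : forall f, Hs f -> ip f f = 0 -> f = (fun _ => 0).
Hypothesis Hk : forall x, Hs (k x).
Hypothesis Hrep : forall f x, Hs f -> ip f (k x) = f x.

Lemma Hsub f g : Hs f -> Hs g -> Hs (fun x => f x - g x).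
Proof.
move=> hf hg; have := Hadd hf (Hscal (-1) hg).
by congr Hs; apply: funext => x; rewrite mulN1r.
Qed.

Lemma ipDl f g h : Hs f -> Hs g -> Hs h ->
  ip (fun x => f x + g x) h = ip f h + ip g h.
Proof.
move=> hf hg hh; have := ipL 1 1 hf hg hh; rewrite !mul1r.
by under eq_fun do rewrite !mul1r.
Qed.

Lemma ipZl a f h : Hs f -> Hs h -> ip (fun x => a * f x) h = a * ip f h.
Proof.
move=> hf hh; have := ipL a 0 hf hf hh; rewrite mul0r addr0.
by under eq_fun do rewrite mul0r addr0.
Qed.

Lemma ipBl f g h : Hs f -> Hs g -> Hs h ->
  ip (fun x => f x - g x) h = ip f h - ip g h.
Proof.
move=> hf hg hh; have := ipL 1 (-1) hf hg hh; rewrite mul1r mulN1r.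
by under eq_fun do rewrite mul1r mulN1r.
Qed.

Lemma ipDr f g h : Hs f -> Hs g -> Hs h ->
  ip h (fun x => f x + g x) = ip h f + ip h g.
Proof.
move=> hf hg hh; rewrite ipC // ?ipDl // ?(ipC hf) ?(ipC hg) //; exact: Hadd.
Qed.

Lemma ipZr a f h : Hs f -> Hs h -> ip h (fun x => a * f x) = a * ip h f.
Proof.
move=> hf hh; rewrite ipC // ?ipZl // ?(ipC hf) //; exact: Hscal.
Qed.

Lemma ipBr f g h : Hs f -> Hs g -> Hs h ->
  ip h (fun x => f x - g x) = ip h f - ip h g.
Proof.
move=> hf hg hh; rewrite ipC // ?ipBl // ?(ipC hf) ?(ipC hg) //; exact: Hsub.
Qed.

Lemma ip0l h : Hs h -> ip (fun _ => 0) h = 0.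
Proof.
move=> hh; transitivity (ip (fun x => 0 * (fun _ : X => 0) x) h).
  by congr ip; apply: funext => x; rewrite mul0r.
by rewrite ipZl // mul0r.
Qed.

Lemma CS f g : Hs f -> Hs g -> ip f g ^+ 2 <= ip f f * ip g g.
Proof.
move=> hf hg.
have [g0|gn0] := eqVneq (ip g g) 0.
  have -> : g = fun _ => 0 by exact: ipdef.
  by rewrite ipC // ?ip0l // expr2 mul0r mulr0.
set t := ip f g / ip g g.
have hs : Hs (fun x => f x - t * g x) by apply: Hsub => //; exact: Hscal.
have := ippos hs.
have htg : Hs (fun x => t * g x) := Hscal t hg.
rewrite ipBl // ipBr // ipZl // ?Hsub // ipBr // ipZr // ipZr //.
rewrite (ipC hg hf).
have gp : 0 < ip g g by rewrite lt0r gn0 ippos.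
move=> h.
have e : ip f f - t * ip f g - t * (ip f g - t * ip g g) =
   (ip f f * ip g g - ip f g ^+ 2) / ip g g by rewrite /t; field.
rewrite e in h; have := mulr_ge0 h (ltW gp); rewrite divfK // subr_ge0 //.
Qed.


Lemma CS' f g : Hs f -> Hs g -> `|ip f g| <= Num.sqrt (ip f f) * Num.sqrt (ip g g).
Proof.
move=> hf hg; rewrite -sqrtrM ?ippos // -sqrtr_sqr; apply: ler_wsqrtr; exact: CS.
Qed.

Lemma ipexp a b f g : Hs f -> Hs g ->
  ip (fun y => a * f y + b * g y) (fun y => a * f y + b * g y) =
  a ^+ 2 * ip f f + 2 * a * b * ip f g + b ^+ 2 * ip g g.
Proof.
move=> hf hg.
have hc : Hs (fun y => a * f y + b * g y) by apply: Hadd; exact: Hscal.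
rewrite ipL // (ipC hf hc) (ipC hg hc) !ipL // (ipC hg hf); ring.
Qed.

Definition hrep m (a : nat -> R) (x : nat -> X) : X -> R :=
  fun y => \sum_(i < m) a i * k (x i) y.

Lemma hrepS m a x : hrep m.+1 a x = fun y => hrep m a x y + a m * k (x m) y.
Proof. by apply: funext => y; rewrite /hrep big_ord_recr. Qed.

Lemma hrep0 a x : hrep 0 a x = fun _ => 0.
Proof. by apply: funext => y; rewrite /hrep big_ord0. Qed.

Lemma Hs_hrep m a x : Hs (hrep m a x).
Proof.
elim: m => [|m IH]; first by rewrite hrep0.
rewrite hrepS; apply: Hadd => //; exact: Hscal.
Qed.

Lemma ip_hrepl m a x h : Hs h ->
  ip (hrep m a x) h = \sum_(i < m) a i * ip (k (x i)) h.
Proof.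
move=> hh; elim: m => [|m IH]; first by rewrite hrep0 ip0l // big_ord0.
rewrite hrepS ipDl //; [|exact: Hs_hrep|exact: Hscal].
by rewrite ipZl // IH big_ord_recr.
Qed.

Inductive Aset : (X -> R) -> R -> Prop :=
 | Aset0 : Aset (fun _ => 0) 0
 | AsetS h l t z : Aset h l -> Aset (fun y => h y + t * k z y) (l + t).

Lemma Aset_rep h l (z0 : X) : Aset h l ->
  exists m a x, h = hrep m a x /\ l = \sum_(i < m) a i.
Proof.
elim=> [|{}h {}l t z _ [m [a [x [-> ->]]]]].
  by exists 0%N, (fun _ => 0), (fun _ => z0); rewrite hrep0 big_ord0.
exists m.+1, (fun i => if i == m then t else a i), (fun i => if i == m then z else x i).
rewrite hrepS big_ord_recr /= eqxx; split.
  apply: funext => y; congr (_ + _); rewrite /hrep; apply: eq_bigr => i _.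
  by rewrite (ltn_eqF (ltn_ord i)).
by congr (_ + _); apply: eq_bigr => i _; rewrite (ltn_eqF (ltn_ord i)).
Qed.

Lemma Aset_Hs h l : Aset h l -> Hs h.
Proof. by elim=> // {}h {}l t z _ hh; apply: Hadd => //; exact: Hscal. Qed.

Lemma AsetZ c h l : Aset h l -> Aset (fun y => c * h y) (c * l).
Proof.
elim=> [|{}h {}l t z _ IH].
  by have := Aset0; congr Aset; [apply: funext => y|]; rewrite mulr0.
have := AsetS (c * t) z IH; congr Aset; last by rewrite mulrDr.
by apply: funext => y; rewrite mulrDr mulrA.
Qed.

Lemma AsetD h l h' l' : Aset h l -> Aset h' l' ->
  Aset (fun y => h y + h' y) (l + l').
Proof.
move=> A1; elim=> [|{}h' {}l' t z _ IH].
  by have := A1; congr Aset; [apply: funext => y|]; rewrite addr0.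
have := AsetS t z IH; congr Aset; last by rewrite addrA.
by apply: funext => y; rewrite addrA.
Qed.

Lemma ip_hrep m a x : ip (hrep m a x) (hrep m a x) =
  \sum_(i < m) \sum_(j < m) a i * a j * k (x j) (x i).
Proof.
rewrite ip_hrepl; last exact: Hs_hrep.
apply: eq_bigr => i _; rewrite (ipC (Hk _) (Hs_hrep m a x)) Hrep; last exact: Hs_hrep.
rewrite /hrep mulr_sumr.
by apply: eq_bigr => j _; rewrite mulrA.
Qed.

Lemma Aset_bound (delta : R) h l :
  (forall x y, k x y = k y x) ->
  psd_kernel (fun x y : X => k x y - delta) ->
  Aset h l -> delta * l ^+ 2 <= ip h h.
Proof.
move=> ksym psd hA; case: hA => [|h0 l0 t z hA0].
  by rewrite ip0l // expr0n mulr0.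
have hA := AsetS t z hA0.
have [m [a [x [-> ->]]]] := Aset_rep z hA.
rewrite ip_hrep; have := psd m (fun i => x i) (fun i => a i).
have -> : \sum_(i < m) \sum_(j < m) a i * a j * (k (x i) (x j) - delta) =
  \sum_(i < m) \sum_(j < m) a i * a j * k (x j) (x i) -
  delta * (\sum_(i < m) a i) ^+ 2.
  rewrite expr2 mulr_suml mulr_sumr -sumrB; apply: eq_bigr => i _.
  rewrite mulr_sumr mulr_sumr -sumrB; apply: eq_bigr => j _.
  by rewrite ksym; ring.
by rewrite subr_ge0.
Qed.

Lemma one_in (delta : R) :
  0 < delta ->
  (forall x y, k x y = k y x) ->
  psd_kernel (fun x y : X => k x y - delta) ->
  (forall u : nat -> X -> R, (forall m, Hs (u m)) ->
         (forall e : R, 0 < e -> exists N : nat, forall p q : nat,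
            (N <= p)%N -> (N <= q)%N ->
            Num.sqrt (ip (fun x => u p x - u q x) (fun x => u p x - u q x)) < e) ->
         exists2 f, Hs f & forall e : R, 0 < e -> exists N : nat, forall p : nat,
            (N <= p)%N ->
            Num.sqrt (ip (fun x => u p x - f x) (fun x => u p x - f x)) < e) ->
  Hs (fun _ => 1).
Proof.
move=> d0 ksym psd Hcomp.
pose S := [set v : R | exists h l, Aset h l /\ v = 2 * l - ip h h].
have Sub : forall v, S v -> v <= delta^-1.
  move=> v [h [l [hA ->]]]; have := Aset_bound ksym psd hA.
  have e : delta^-1 * (1 - delta * l) ^+ 2 = delta^-1 - 2 * l + delta * l ^+ 2.
    by field; rewrite gt_eqF.
  have dinv : 0 < delta^-1 by rewrite invr_gt0.
  have := mulr_ge0 (ltW dinv) (sqr_ge0 (1 - delta * l)).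
  rewrite e; lra.
have hsup : has_sup S.
  split; last by exists delta^-1 => v /Sub.
  exists 0, (fun _ => 0), 0; split; first exact: Aset0.
  by rewrite ip0l // mulr0 subr0.
pose s := sup S.
have ub : forall v, S v -> v <= s := sup_upper_bound hsup.
have adh : forall p : nat, exists hl : (X -> R) * R,
    Aset hl.1 hl.2 /\ s - (p.+1%:R)^-1 < 2 * hl.2 - ip hl.1 hl.1.
  move=> p; have pp : 0 < (p.+1%:R : R)^-1 by rewrite invr_gt0 ltr0Sn.
  have [v [h [l [hA ->]]] hv] := sup_adherent pp hsup.
  by exists (h, l).
have [F hF] := choice adh.
pose u p := (F p).1; pose lp p := (F p).2.
have hu : forall p, Hs (u p) by move=> p; apply: (@Aset_Hs _ (lp p)); exact: (hF p).1.
have cauchy : forall p q,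
    ip (fun x => u p x - u q x) (fun x => u p x - u q x) <
    2 * ((p.+1%:R)^-1 + (q.+1%:R)^-1).
  move=> p q.
  have hm := AsetD (AsetZ 2^-1 (hF p).1) (AsetZ 2^-1 (hF q).1).
  have := ub _ (ex_intro _ _ (ex_intro _ _ (conj hm erefl))).
  rewrite (ipexp _ _ (hu p) (hu q)).
  have -> : (fun x => u p x - u q x) = (fun x => 1 * u p x + (-1) * u q x).
    by apply: funext => x; rewrite mul1r mulN1r.
  rewrite (ipexp _ _ (hu p) (hu q)).
  have := (hF p).2; have := (hF q).2; rewrite -/(u p) -/(u q) -/(lp p) -/(lp q).
  move=> h1 h2 h3.
  have e1 : (2^-1 : R) ^+ 2 = 4^-1 by rewrite expr2 -invfM; congr (_^-1); ring.
  rewrite e1 in h3; rewrite /u /lp in h1 h2 h3 *.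
  move: h1 h2 h3; set A := ip (F p).1 (F p).1; set B := ip (F q).1 (F q).1; set C := ip (F p).1 (F q).1.
  set a := (F p).2; set b := (F q).2; set ep := (p.+1%:R^-1); set eq := (q.+1%:R^-1).
  clearbody A B C a b ep eq s; lra.
have [g hg conv] : exists2 f, Hs f & forall e : R, 0 < e -> exists N : nat,
    forall p : nat, (N <= p)%N ->
    Num.sqrt (ip (fun x => u p x - f x) (fun x => u p x - f x)) < e.
  apply: Hcomp => // e e0.
  have e4 : 0 < e * e / 4 by apply: divr_gt0; [exact: mulr_gt0|exact: ltr0n].
  have [N hN] := arch e4.
  exists N => p q hp hq.
  have ee : Num.sqrt (e ^+ 2) = e by rewrite sqrtr_sqr ger0_norm; [|exact: ltW].
  rewrite -ee ltr_sqrt; last exact: exprn_gt0.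
  have := cauchy p q; have := epsN R hp; have := epsN R hq.
  move: hN; rewrite expr2.
  move: (ip _ _) (p.+1%:R^-1 : R) (q.+1%:R^-1 : R) (N.+1%:R^-1 : R) (e * e) => D a b c E.
  move=> h1 h2 h3 h4; lra.
have key : forall p t z, 2 * t * (1 - u p z) < (p.+1%:R)^-1 + t ^+ 2 * k z z.
  move=> p t z.
  have hA := AsetS t z (hF p).1.
  have := ub _ (ex_intro _ _ (ex_intro _ _ (conj hA erefl))).
  have -> : (fun y => (F p).1 y + t * k z y) = (fun y => 1 * u p y + t * k z y).
    by apply: funext => y; rewrite mul1r.
  rewrite (ipexp _ _ (hu p) (Hk z)) Hrep ?Hrep; [|exact: Hk|exact: hu].
  have := (hF p).2; rewrite -/(u p) -/(lp p).
  move: (ip (u p) (u p)) (lp p) (u p z) (k z z) ((p.+1%:R : R)^-1) => Q l v kk ep.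
  move=> h1 h2; clearbody s; lra.
have dist : forall p z, `|u p z - g z| <=
    Num.sqrt (ip (fun x => u p x - g x) (fun x => u p x - g x)) * Num.sqrt (k z z).
  move=> p z; have hd := Hsub (hu p) hg.
  by have := CS' hd (Hk z); rewrite Hrep // Hrep //; exact: Hk.
have -> : (fun _ : X => 1) = g; last exact: hg.
apply: funext => z; apply/eqP; rewrite eq_sym -subr_eq0; apply/negPn/negP => c0.
have kk0 : 0 <= k z z by rewrite -(Hrep z (Hk z)); exact: ippos.
pose c := 1 - g z.
have cn0 : c != 0 by rewrite /c -opprB oppr_eq0.
pose t := c / (k z z + 1).
pose eta := 2 * t * c - t ^+ 2 * k z z.
have k1 : k z z + 1 != 0 by rewrite gt_eqF // ltr_pwDr.
have etae : eta = c ^+ 2 * (k z z + 2) / (k z z + 1) ^+ 2.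
  by rewrite /eta /t; field.
have eta0 : 0 < eta.
  rewrite etae; apply: divr_gt0; last by apply: exprn_gt0; rewrite ltr_pwDr.
  apply: mulr_gt0; first by rewrite exprn_even_gt0.
  by rewrite ltr_pwDr // ltr0n.
pose B := `|2 * t| * Num.sqrt (k z z).
have B0 : 0 <= B by rewrite mulr_ge0 // sqrtr_ge0.
have B1 : 0 < 2 * (B + 1) by rewrite mulr_gt0 ?ltr0n // ltr_pwDr.
pose e := eta / (2 * (B + 1)).
have e0 : 0 < e by rewrite divr_gt0.
have [N1 hN1] := conv e e0.
have eta2 : 0 < eta / 2 by rewrite divr_gt0 // ltr0n.
have [N2 hN2] := arch eta2.
pose p := maxn N1 N2.
have h1 := hN1 p (leq_maxl N1 N2).
have h2 := epsN R (leq_maxr N1 N2 : (N2 <= p)%N).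
have h3 := key p t z.
have h4 := dist p z.
have Be : B * e = eta / 2 - e.
  rewrite /e; field; by rewrite gt_eqF // ltr_pwDr.
have h5 : B * Num.sqrt (ip (fun x => u p x - g x) (fun x => u p x - g x)) <= B * e.
  by apply: ler_wpM2l => //; exact: ltW.
have h6 : 2 * t * (u p z - g z) <= `|2 * t| * `|u p z - g z|.
  by rewrite -normrM ler_norm.
have h7 : `|2 * t| * `|u p z - g z| <= B *
   Num.sqrt (ip (fun x => u p x - g x) (fun x => u p x - g x)).
  by rewrite /B -mulrA [Num.sqrt (k z z) * _]mulrC; apply: ler_wpM2l.
have h8 : 2 * t * (1 - u p z) = 2 * t * c - 2 * t * (u p z - g z).
  by rewrite /c; ring.
have h9 : eta = 2 * t * c - t ^+ 2 * k z z by [].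
move: h1 h2 h3 h4 h5 h6 h7 h8 h9 hN2 Be e0.
move: (2 * t * (1 - u p z)) (2 * t * c) (2 * t * (u p z - g z)) (t ^+ 2 * k z z)
  (`|2 * t| * `|u p z - g z|) (B * Num.sqrt _) (B * e) ((p.+1%:R : R)^-1) ((N2.+1%:R : R)^-1).
move=> *; clearbody eta e; lra.
Qed.
Variables (n : nat) (Xs : 'I_n -> X) (T : 'I_n -> R) (I : 'I_n -> bool).
Hypothesis n1 : (1 <= n)%N.

Lemma n_gt0 : 0 < (n%:R : R).
Proof. by rewrite ltr0n. Qed.

Lemma Sn_gt0 f i : 0 < Sn Xs T f (T i).
Proof.
rewrite /Sn mulr_gt0 ?invr_gt0 ?n_gt0 //.
rewrite (bigD1 i) //= /Rrisk lexx mul1r.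
apply: lt_le_trans (expR_gt0 (f (Xs i))) _; rewrite lerDl.
apply: sumr_ge0 => j _; apply: mulr_ge0; last exact: expR_ge0.
by case: ifP.
Qed.

Lemma Sn_lb f i : n%:R^-1 * expR (f (Xs i)) <= Sn Xs T f (T i).
Proof.
rewrite /Sn ler_wpM2l ?invr_ge0 ?ler0n //.
rewrite (bigD1 i) //= /Rrisk lexx mul1r.
rewrite lerDl.
apply: sumr_ge0 => j _; apply: mulr_ge0; last exact: expR_ge0.
by case: ifP.
Qed.

Lemma Ncount01 i : Ncount T I i 1 = 0 \/ Ncount T I i 1 = 1.
Proof. by rewrite /Ncount; case: ifP; [right|left]. Qed.

Lemma elln_alt f : elln Xs T I f =
  n%:R^-1 * \sum_(i < n) Ncount T I i 1 * (ln (Sn Xs T f (T i)) - f (Xs i)).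
Proof.
rewrite /elln -mulrBr -sumrB; congr (_ * _); apply: eq_bigr => i _.
by rewrite mulrBr [f (Xs i) * _]mulrC.
Qed.

Lemma elln_lb f : - ln (n%:R) <= elln Xs T I f.
Proof.
rewrite elln_alt.
have h : \sum_(i < n) (- ln (n%:R : R)) <=
   \sum_(i < n) Ncount T I i 1 * (ln (Sn Xs T f (T i)) - f (Xs i)).
  apply: ler_sum => i _.
  have ln0 : 0 <= ln (n%:R : R) by apply: ln_ge0; rewrite ler1n.
  case: (Ncount01 i) => ->; first by rewrite mul0r oppr_le0.
  rewrite mul1r lerBrDr.
  have := Sn_lb f i; rewrite -ler_ln ?posrE ?Sn_gt0 ?mulr_gt0 ?invr_gt0 ?n_gt0 ?expR_gt0 //.
  rewrite lnM ?posrE ?invr_gt0 ?n_gt0 ?expR_gt0 // lnV ?posrE ?n_gt0 // expRK.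
  move=> h; lra.
rewrite sumr_const card_ord in h.
have e : n%:R^-1 * ((- ln (n%:R : R)) *+ n) = - ln (n%:R : R).
  rewrite -[(- ln (n%:R : R)) *+ n]mulr_natr; field; by rewrite (gt_eqF n_gt0).
rewrite -e; apply: ler_wpM2l => //; rewrite invr_ge0; exact: ler0n.
Qed.

Lemma Rrisk_ge0 j t : 0 <= Rrisk T j t.
Proof. by rewrite /Rrisk; case: ifP. Qed.

Lemma Ncount_ge0 i : 0 <= Ncount T I i 1.
Proof. by case: (Ncount01 i) => ->. Qed.

Lemma elln0 : elln Xs T I (fun _ => 0) <= 0.
Proof.
rewrite elln_alt; apply: mulr_ge0_le0; first by rewrite invr_ge0 ler0n.
apply: sumr_le0 => i _; apply: mulr_ge0_le0; first exact: Ncount_ge0.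
rewrite subr0; apply: ln_le0.
rewrite /Sn; under eq_bigr do rewrite expR0 mulr1.
have : \sum_(j < n) Rrisk T j (T i) <= \sum_(j < n) (1 : R).
  by apply: ler_sum => j _; rewrite /Rrisk; case: ifP.
rewrite sumr_const card_ord => h.
have hn : 0 <= (n%:R : R)^-1 by rewrite invr_ge0 ler0n.
apply: le_trans (ler_wpM2l hn h) _; rewrite mulVf //; exact: (negbT (gt_eqF n_gt0)).
Qed.

Lemma elln_shift c f : elln Xs T I (fun x => f x - c) = elln Xs T I f.
Proof.
rewrite !elln_alt; congr (_ * _); apply: eq_bigr => i _; congr (_ * _).
have -> : Sn Xs T (fun x => f x - c) (T i) = expR (- c) * Sn Xs T f (T i).
  rewrite /Sn mulrCA; congr (_ * _); rewrite mulr_sumr; apply: eq_bigr => j _.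
  by rewrite mulrCA expRD [expR (f _) * _]mulrC.
rewrite lnM ?posrE ?expR_gt0 ?Sn_gt0 // expRK; ring.
Qed.

Lemma ln_mid f g i :
  ln (Sn Xs T (fun x => 2^-1 * f x + 2^-1 * g x) (T i)) <=
  2^-1 * ln (Sn Xs T f (T i)) + 2^-1 * ln (Sn Xs T g (T i)).
Proof.
have A0 := Sn_gt0 f i; have B0 := Sn_gt0 g i.
set A := Sn Xs T f (T i) in A0 *; set B := Sn Xs T g (T i) in B0 *.
pose mu := 2^-1 * (ln B - ln A).
pose w := 2^-1 * ln A + 2^-1 * ln B.
have le1 : Sn Xs T (fun x => 2^-1 * f x + 2^-1 * g x) (T i) <=
    2^-1 * (expR mu * A + expR (- mu) * B).
  have -> : 2^-1 * (expR mu * A + expR (- mu) * B) =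
     n%:R^-1 * \sum_(j < n) Rrisk T j (T i) *
        (2^-1 * (expR (f (Xs j) + mu) + expR (g (Xs j) - mu))).
    rewrite /A /B /Sn !mulr_sumr -big_split !mulr_sumr; apply: eq_bigr => j _.
    rewrite /= !expRD; ring.
  rewrite /Sn; apply: ler_wpM2l; first by rewrite invr_ge0 ler0n.
  apply: ler_sum => j _; apply: ler_wpM2l; first exact: Rrisk_ge0.
  have := midexp (f (Xs j) + mu) (g (Xs j) - mu).
  suff -> : 2^-1 * (f (Xs j) + mu) + 2^-1 * (g (Xs j) - mu) =
     2^-1 * f (Xs j) + 2^-1 * g (Xs j) by [].
  ring.
have eqw : 2^-1 * (expR mu * A + expR (- mu) * B) = expR w.
  rewrite -{1}(lnK A0) -{1}(lnK B0) -!expRD.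
  have -> : mu + ln A = w by rewrite /mu /w; field.
  have -> : - mu + ln B = w by rewrite /mu /w; field.
  by field.
rewrite eqw in le1; rewrite -/w -[X in _ <= X](expRK w) ler_ln ?posrE ?expR_gt0 //.
apply: lt_le_trans (Sn_gt0 _ i) _; exact: lexx.
Qed.

Lemma elln_mid f g : elln Xs T I (fun x => 2^-1 * f x + 2^-1 * g x) <=
  2^-1 * (elln Xs T I f + elln Xs T I g).
Proof.
rewrite !elln_alt.
set a := fun i : 'I_n => Ncount T I i 1 * (ln (Sn Xs T f (T i)) - f (Xs i)).
set b := fun i : 'I_n => Ncount T I i 1 * (ln (Sn Xs T g (T i)) - g (Xs i)).
have -> : 2^-1 * (n%:R^-1 * \sum_(i < n) a i + n%:R^-1 * \sum_(i < n) b i) =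
    n%:R^-1 * \sum_(i < n) (2^-1 * a i + 2^-1 * b i).
  by rewrite big_split /= -!mulr_sumr; ring.
apply: ler_wpM2l; first by rewrite invr_ge0 ler0n.
apply: ler_sum => i _; rewrite /a /b.
have := ln_mid f g i.
case: (Ncount01 i) => ->; first by move=> _; rewrite !mul0r !mulr0 addr0.
rewrite !mul1r => h; lra.
Qed.

Lemma Pn_lin (a b : R) (f g : X -> R) : Pn Xs (fun x => a * f x + b * g x) = a * Pn Xs f + b * Pn Xs g.
Proof. by rewrite /Pn big_split /= -!mulr_sumr; ring. Qed.

Lemma Pn1 : Pn Xs (fun _ => 1) = 1 :> R.
Proof.
rewrite /Pn sumr_const card_ord -[_ *+ n]mulr_natr mul1r mulVf //.
exact: (negbT (gt_eqF n_gt0)).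
Qed.

Lemma Pn0 : Pn Xs (fun _ => 0) = 0 :> R.
Proof. by rewrite /Pn big1 // mulr0. Qed.

Lemma Pn_shift (c : R) (f : X -> R) : Pn Xs (fun x => f x - c * 1) = Pn Xs f - c.
Proof.
rewrite /Pn sumrB mulrBr; congr (_ - _).
under eq_bigr do rewrite mulr1.
rewrite sumr_const card_ord -[c *+ n]mulr_natr; field.
by rewrite (gt_eqF n_gt0).
Qed.

Lemma min_props gamma fh : Hs (fun _ => 1) -> 0 < gamma ->
  is_minimiser Xs T I Hs ip gamma fh ->
  Pn Xs fh = 0 /\ gamma * ip fh fh <= ln (n%:R : R).
Proof.
move=> one g0 [hfh minh].
set c := Pn Xs fh.
pose f0 := fun x => fh x - c.
have e0 : f0 = fun x => fh x - c * 1 by apply: funext => x; rewrite mulr1.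
have hf0 : Hs f0 by rewrite e0; apply: Hsub => //; exact: Hscal.
have Pf0 : Pn Xs f0 = 0 by rewrite e0 Pn_shift subrr.
have := minh f0 hf0; rewrite /elln_gamma /= -/c -/f0 Pf0 elln_shift.
have -> : (fun x => f0 x - 0) = f0 by apply: funext => x; rewrite subr0.
move=> h.
have c0 : c = 0.
  have : gamma * c ^+ 2 <= 0 by rewrite expr0n mulr0 in h; lra.
  rewrite pmulr_rle0 // => hc.
  by apply/eqP; rewrite -sqrf_eq0 eq_le hc sqr_ge0.
split => //.
have := minh _ H0; rewrite /elln_gamma /= -/c c0 Pn0.
have -> : (fun x => fh x - 0) = fh by apply: funext => x; rewrite subr0.
have -> : (fun x : X => 0 - 0) = (fun _ => 0 : R) by apply: funext => x; rewrite subr0.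
rewrite ip0l // expr0n /= !mulr0 !addr0 => h2.
move: (elln_lb fh) elln0 h2; lra.
Qed.

Lemma sqrt_le_rho (gamma v : R) : 0 < gamma -> 0 <= v -> gamma * v <= ln (n%:R : R) ->
  Num.sqrt v <= Num.sqrt (ln (n%:R : R)) / Num.sqrt gamma.
Proof.
move=> g0 v0 h.
have L0 : 0 <= ln (n%:R : R) by apply: ln_ge0; rewrite ler1n.
rewrite -sqrtrV; last exact: ltW.
rewrite -sqrtrM //; apply: ler_wsqrtr.
by rewrite ler_pdivlMr // mulrC.
Qed.

Lemma pow32 (gamma : R) : 0 < gamma -> gamma `^ (3 / 2) = gamma * Num.sqrt gamma.
Proof.
move=> g0.
have -> : (3 / 2 : R) = 1 + 2^-1 by field.
rewrite powRD; last by rewrite (gt_eqF g0) implybT.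
rewrite powRr1; last exact: ltW.
by rewrite powR12_sqrt //; exact: ltW.
Qed.

Lemma main_sec (gamma gamma' : R) (fh fh' : X -> R) (K : R) (x : X) :
  Hs (fun _ => 1) -> 0 < gamma -> gamma <= gamma' -> (forall z, k z z <= K) ->
  is_minimiser Xs T I Hs ip gamma fh -> is_minimiser Xs T I Hs ip gamma' fh' ->
  `|fh' x - fh x| <= 2 * Num.sqrt K * (gamma' - gamma) * Num.sqrt (ln (n%:R : R))
      / (gamma `^ (3 / 2)).
Proof.
move=> one g0 gg' kK m1 m2.
have g'0 : 0 < gamma' := lt_le_trans g0 gg'.
have [P1 B1] := min_props one g0 m1.
have [P2 B2] := min_props one g'0 m2.
case: m1 => hfh min1; case: m2 => hfh' min2.
pose m := fun y => 2^-1 * fh y + 2^-1 * fh' y.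
have hm : Hs m by apply: Hadd; exact: Hscal.
have Pm : Pn Xs m = 0 by rewrite /m Pn_lin P1 P2 !mulr0 addr0.
have Jeq : forall g f, Pn Xs f = 0 ->
    elln_gamma Xs T I ip g f = elln Xs T I f + g * ip f f.
  move=> g f Pf; rewrite /elln_gamma /= Pf.
  have -> : (fun x => f x - 0) = f by apply: funext => y; rewrite subr0.
  by rewrite expr0n /= mulr0 addr0.
have h1 := min1 m hm; have h2 := min2 m hm.
rewrite !Jeq // in h1 h2.
have Em : elln Xs T I m <= 2^-1 * (elln Xs T I fh + elln Xs T I fh') := elln_mid fh fh'.
set Q := ip fh fh in h1 B1; set Q' := ip fh' fh' in h2 B2.
set M := ip fh fh'.
have Qm : ip m m = 2^-1 ^+ 2 * Q + 2 * 2^-1 * 2^-1 * M + 2^-1 ^+ 2 * Q'.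
  exact: ipexp.
pose d := fun y => fh' y - fh y.
have hd : Hs d := Hsub hfh' hfh.
have Qd : ip d d = Q' - 2 * M + Q.
  have -> : d = (fun y => 1 * fh' y + (-1) * fh y).
    by apply: funext => y; rewrite /d mul1r mulN1r.
  rewrite ipexp // (ipC hfh' hfh) -/M -/Q -/Q'; ring.
pose s := fun y => fh' y + fh y.
have hs : Hs s := Hadd hfh' hfh.
have Eds : ip d s = Q' - Q.
  rewrite /d /s ipBl // ipDr // ipDr // (ipC hfh hfh') -/M -/Q -/Q'; ring.
have Qs : ip s s = Q' + 2 * M + Q.
  rewrite /s ipDl // ipDr // ipDr // (ipC hfh' hfh) -/M -/Q -/Q'; ring.
have CS1 := CS' hd hs; have CS2 := CS' hfh hfh'.
rewrite -/M -/Q -/Q' in CS2.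
have Q0 : 0 <= Q := ippos hfh; have Q'0 : 0 <= Q' := ippos hfh'.
have D0 : 0 <= ip d d := ippos hd.
set q := Num.sqrt Q in CS2; set q' := Num.sqrt Q' in CS2.
set sig := Num.sqrt (ip d d) in CS1.
set rho := Num.sqrt (ln (n%:R : R)) / Num.sqrt gamma.
have q0 : 0 <= q := sqrtr_ge0 _. have q'0 : 0 <= q' := sqrtr_ge0 _.
have sig0 : 0 <= sig := sqrtr_ge0 _.
have qr : q <= rho by apply: sqrt_le_rho.
have q'r : q' <= rho.
  apply: sqrt_le_rho => //; apply: le_trans B2; exact: ler_wpM2r.
have ss : Num.sqrt (ip s s) <= q + q'.
  have e : q + q' = Num.sqrt ((q + q') ^+ 2) by rewrite sqrtr_sqr ger0_norm // addr_ge0.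
  rewrite e; apply: ler_wsqrtr; rewrite Qs.
  have -> : (q + q') ^+ 2 = q ^+ 2 + 2 * (q * q') + q' ^+ 2 by ring.
  rewrite /q /q' !sqr_sqrtr //.
  have := ler_norm M; move: CS2; move: (q * q') (`|M|) => a b; lra.
have e1 : gamma * ip m m = gamma * Q - gamma * (3 * Q - 2 * M - Q') / 4.
  by rewrite Qm; field.
have e2 : gamma' * ip m m = gamma' * Q' - gamma' * (3 * Q' - 2 * M - Q) / 4.
  by rewrite Qm; field.
rewrite e1 in h1; rewrite e2 in h2.
have eA : gamma * (3 * Q - 2 * M - Q') + gamma' * (3 * Q' - 2 * M - Q) =
   (gamma + gamma') * ip d d - 2 * (gamma' - gamma) * (Q - Q') by rewrite Qd; ring.
have main : (gamma + gamma') * ip d d <= 2 * (gamma' - gamma) * (Q - Q').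
  move: h1 h2 Em eA.
  move: (gamma * (3 * Q - 2 * M - Q')) (gamma' * (3 * Q' - 2 * M - Q)) => A1 A2.
  move: ((gamma + gamma') * ip d d) (2 * (gamma' - gamma) * (Q - Q')) => U V.
  move: (elln Xs T I m) (elln Xs T I fh) (elln Xs T I fh') (gamma * Q) (gamma' * Q') => a b c w w'.
  move=> *; lra.
have dQ : Q - Q' <= sig * (2 * rho).
  have : Q - Q' <= `|ip d s| by rewrite Eds distrC ler_norm.
  move=> h; apply: le_trans h _; apply: le_trans CS1 _.
  apply: ler_wpM2l => //; apply: le_trans ss _; lra.
have gg0 : 0 <= 2 * (gamma' - gamma) by rewrite mulr_ge0 // subr_ge0.
have main2 : (gamma + gamma') * sig ^+ 2 <= 2 * (gamma' - gamma) * (sig * (2 * rho)).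
  rewrite /sig sqr_sqrtr //; apply: le_trans main _; exact: ler_wpM2l.
have rho0 : 0 <= rho by rewrite divr_ge0 // sqrtr_ge0.
have sigb : sig <= 2 * (gamma' - gamma) * rho / gamma.
  rewrite ler_pdivlMr //.
  have [s0|sp] := eqVneq sig 0.
    by rewrite s0 mul0r mulr_ge0 // mulr_ge0.
  have sp' : 0 < sig by rewrite lt0r sp.
  have : (gamma + gamma') * sig <= 2 * (gamma' - gamma) * (2 * rho).
    have e3 : (gamma + gamma') * sig ^+ 2 = ((gamma + gamma') * sig) * sig by ring.
    have e4 : 2 * (gamma' - gamma) * (sig * (2 * rho)) =
      (2 * (gamma' - gamma) * (2 * rho)) * sig by ring.
    by rewrite e3 e4 ler_pM2r in main2.
  have : gamma * sig <= gamma' * sig by rewrite ler_wpM2r // ltW.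
  have e5 : 2 * (gamma' - gamma) * (2 * rho) = 2 * (2 * (gamma' - gamma) * rho) by ring.
  rewrite mulrDl e5 [sig * gamma]mulrC.
  move: (gamma * sig) (gamma' * sig) (2 * (gamma' - gamma) * rho) => a b c; lra.
have ev : fh' x - fh x = ip d (k x) by rewrite Hrep.
rewrite ev; apply: le_trans (CS' hd (Hk x)) _; rewrite Hrep // -/sig.
apply: le_trans (_ : sig * Num.sqrt K <= _).
  by apply: ler_wpM2l => //; apply: ler_wsqrtr.
apply: le_trans (_ : 2 * (gamma' - gamma) * rho / gamma * Num.sqrt K <= _).
  by apply: ler_wpM2r => //; exact: sqrtr_ge0.
rewrite pow32 // /rho le_eqVlt; apply/orP; left; apply/eqP; field.
by rewrite (gt_eqF g0) /= sqrtr_eq0 -ltNge g0.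
Qed.

End All.

Theorem mainTheorem14 (R : realType) (X : metricType R)
  (k : X -> X -> R) (Hs : set (X -> R)) (ip : (X -> R) -> (X -> R) -> R)
  (K delta : R) (n : nat) (Xs : 'I_n -> X) (T : 'I_n -> R) (I : 'I_n -> bool)
  (gamma gamma' : R) (fh fh' : X -> R) :
  locally_compact [set: X] ->
  (forall A : set X, open A -> sigma_compact A) ->
  continuous (fun p : X * X => k p.1 p.2) ->
  (forall x y, k x y = k y x) ->
  psd_kernel k ->
  is_RKHS k Hs ip ->
  has_ubound (range (fun x => k x x)) ->
  K = sup (range (fun x => k x x)) ->
  0 < delta -> psd_kernel (fun x y => k x y - delta) ->
  (1 <= n)%N ->
  (forall i, 0 < T i) ->
  0 < gamma -> gamma <= gamma' ->
  is_minimiser Xs T I Hs ip gamma fh ->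
  is_minimiser Xs T I Hs ip gamma' fh' ->
  forall x : X,
    `|fh' x - fh x| <=
      2 * Num.sqrt K * (gamma' - gamma) * Num.sqrt (ln (n%:R : R))
      / (gamma `^ (3 / 2)).
Proof.
move=> _ _ _ ksym psd RK hub HK d0 psdd n1 Tpos g0 gg' m1 m2 x.
case: RK => [H0 [Hadd [Hscal [ipC [ipL [ippos [ipdef [Hcomp [Hk Hrep]]]]]]]]].
have one : Hs (fun _ => 1).
  apply: one_in; first [exact: psdd | exact: d0 | eassumption].
have kK : forall z, k z z <= K.
  move=> z; rewrite HK; have := ub_le_sup hub; apply; by exists z.
exact: (main_sec H0 Hadd Hscal ipC ipL ippos ipdef Hk Hrep n1 x one g0 gg' kK m1 m2).
Qed.
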